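(* Let $H$ be a complex Hilbert space, $\alpha$ a state on $H$ and $A$ an observable on $H$ with outcome space $(\Omega_A,\mathcal{F}_A)$. Let $\mathcal{I}=\mathcal{H}_{(\alpha,A)}$ be the Holevo instrument $\mathcal{H}_{(\alpha,A)}(\Delta)(\rho)=\mathrm{tr}[\rho A(\Delta)]\alpha$. Then $\mathcal{U}_\mathcal{I}=\{\mathcal{I}_a^*\colon a\in\mathcal{E}(H)\}$ is a $Sob$ effect algebra.
   Context: $\mathcal{E}(H)$ is the set of effects ($0\le a\le I$); states are effects of trace one. A sub-observable with outcome space $(\Omega,\mathcal{F})$ is a map $\mathcal{F}\to\mathcal{E}(H)$ countably additive in the strong operator topology; it is an observable if its value at $\Omega$ is $I$; $Sob(H)$ is the set of sub-observables, with pointwise sums and differences. For an instrument $\mathcal{I}$ (operation-valued measure with $\mathcal{I}(\Omega_\mathcal{I})$ trace preserving), the dual $\mathcal{I}^*(\Delta)$ is defined by $\mathrm{tr}[\rho\,\mathcal{I}^*(\Delta)(B)]=\mathrm{tr}[\mathcal{I}(\Delta)(\rho)B]$ for all states $\rho$ and bounded $B$, and $\mathcal{I}_a^*(\Delta)=\mathcal{I}^*(\Delta)(a)$ (for the Holevo instrument, $\mathcal{I}_a^*(\Delta)=\mathrm{tr}(\alpha a)A(\Delta)$). A subset $\mathcal{U}\subseteq Sob(H)$ all of whose elements have the same outcome space is a $Sob$ effect algebra if: (S1) there is an observable $Z\in\mathcal{U}$; (S2) $A\in\mathcal{U}$ implies $Z-A\in\mathcal{U}$; (S3) $A,B\in\mathcal{U}$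 and $A+B\in Sob(H)$ imply $A+B\in\mathcal{U}$. *)

(* Defs.v *)
From HB Require Import structures.
From mathcomp Require Import all_boot all_order all_algebra.
From mathcomp Require Import complex.
From mathcomp Require Import boolp classical_sets reals measure.

Set Implicit Arguments.
Unset Strict Implicit.
Unset Printing Implicit Defensive.

Import Order.TTheory GRing.Theory Num.Theory.
Local Open Scope ring_scope.
Local Open Scope classical_set_scope.

Section Hilbert.
Variable R : realType.
Local Notation C := (R[i]).
Variable H : lmodType C.
(* inner product, linear in the second argument, antilinear in the first *)
Variable ip : H -> H -> C.

Definition hconv (u : nat -> H) (x : H) : Prop :=
  forall eps : C, 0 < eps -> exists N : nat, forall n : nat, (N <= n)%N ->
    ip (u n - x) (u n - x) < eps.

Definition hcauchy (u : nat -> H) : Prop :=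
  forall eps : C, 0 < eps -> exists N : nat, forall n m : nat,
    (N <= n)%N -> (N <= m)%N -> ip (u n - u m) (u n - u m) < eps.

Record is_hilbert : Prop := IsHilbert {
  ip_linr : forall (c : C) (x y z : H), ip x (c *: y + z) = c * ip x y + ip x z;
  ip_conj : forall x y : H, ip y x = conjc (ip x y);
  ip_ge0 : forall x : H, 0 <= ip x x;
  ip_eq0 : forall x : H, ip x x = 0 -> x = 0;
  ip_complete : forall u : nat -> H, hcauchy u -> exists x, hconv u x
}.

Definition linear_op (T : H -> H) : Prop :=
  forall (c : C) (x y : H), T (c *: x + y) = c *: T x + T y.

Definition bounded_op (T : H -> H) : Prop :=
  linear_op T /\ exists M : C, 0 <= M /\ forall x : H, ip (T x) (T x) <= M * ip x x.

Definition effect (a : H -> H) : Prop :=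
  bounded_op a /\ forall x : H, 0 <= ip x (a x) /\ ip x (a x) <= ip x x.

Definition onb (B : set H) : Prop :=
  (forall e, B e -> ip e e = 1) /\
  (forall e f, B e -> B f -> e <> f -> ip e f = 0) /\
  (forall x, (forall e, B e -> ip e x = 0) -> x = 0).

(* unconditional (net) summation of a family indexed by a set B of vectors *)
Definition has_sum (B : set H) (f : H -> C) (s : C) : Prop :=
  forall eps : C, 0 < eps -> exists s0 : seq H,
    uniq s0 /\ (forall e, e \in s0 -> B e) /\
    forall s1 : seq H, uniq s1 -> (forall e, e \in s0 -> e \in s1) ->
      (forall e, e \in s1 -> B e) -> `|\sum_(e <- s1) f e - s| < eps.

Definition trace_is (T : H -> H) (t : C) : Prop :=
  forall B : set H, onb B -> has_sum B (fun e => ip e (T e)) t.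

(* states: positive (hence self-adjoint) trace-class operators of trace one *)
Definition state (alpha : H -> H) : Prop :=
  bounded_op alpha /\ (forall x : H, 0 <= ip x (alpha x)) /\ trace_is alpha 1.

Variables (d : measure_display) (Omega : measurableType d).
Definition opmap := set Omega -> H -> H.

(* sub-observables: effect-valued, countably additive in the strong operator topology *)
Definition sub_observable (M : opmap) : Prop :=
  (forall D : set Omega, measurable D -> effect (M D)) /\
  (forall F : nat -> set Omega, (forall n, measurable (F n)) -> trivIset setT F ->
     forall x : H,
       hconv (fun N => \sum_(n < N) M (F n) x) (M (\bigcup_n F n) x)).

Definition observable (M : opmap) : Prop :=
  sub_observable M /\ M setT = id.

Definition opmap_add (M N : opmap) : opmap := fun D x => M D x + N D x.
Definition opmap_sub (M N : opmap) : opmap := fun D x => M D x - N D x.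

Definition Sob_effect_algebra (U : set opmap) : Prop :=
  (forall M, U M -> sub_observable M) /\
  exists Z : opmap, [/\ U Z, observable Z,
    (forall M, U M -> U (opmap_sub Z M)) &
    (forall M N, U M -> U N -> sub_observable (opmap_add M N) ->
       U (opmap_add M N))].

(* Dual of the Holevo instrument H_(alpha,A):  I_a^*(D) = tr(alpha a) A(D) *)
Definition holevo_dual_set (alpha : H -> H) (A : opmap) : set opmap :=
  [set M | exists a : H -> H, effect a /\
     exists t : C, trace_is (alpha \o a) t /\ M = (fun D x => t *: A D x)].

End Hilbert.

(* Main.v *)
Require Import Defs.
From HB Require Import structures.
From mathcomp Require Import all_boot all_order all_algebra.
From mathcomp Require Import complex.
From mathcomp Require Import boolp classical_sets reals measure.
From mathcomp Require Import ring lra.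
Set Implicit Arguments.
Unset Strict Implicit.
Unset Printing Implicit Defensive.
Import Order.TTheory GRing.Theory Num.Theory.
Local Open Scope ring_scope.
Local Open Scope classical_set_scope.
Local Open Scope complex_scope.

Section Forms.
Variable R : realType.
Local Notation C := R[i].
Variable H : lmodType C.

Definition sesq (q : H -> H -> C) :=
  [/\ forall (c : C) (x y z : H), q x (c *: y + z) = c * q x y + q x z,
      forall x y : H, q y x = conjc (q x y) &
      forall x : H, 0 <= q x x].

Variable q : H -> H -> C.
Hypothesis hq : sesq q.

Lemma qlin c x y z : q x (c *: y + z) = c * q x y + q x z.
Proof. by case: hq. Qed.
Lemma qconj x y : q y x = conjc (q x y).
Proof. by case: hq. Qed.
Lemma qge0 x : 0 <= q x x.
Proof. by case: hq. Qed.

Lemma qDr x y z : q x (y + z) = q x y + q x z.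
Proof. by have := qlin 1 x y z; rewrite scale1r mul1r. Qed.
Lemma q0r x : q x 0 = 0.
Proof. by apply/(addrI (q x 0)); rewrite addr0 -qDr addr0. Qed.
Lemma qZr x c y : q x (c *: y) = c * q x y.
Proof. by have := qlin c x y 0; rewrite addr0 q0r addr0. Qed.
Lemma qNr x y : q x (- y) = - q x y.
Proof. by rewrite -scaleN1r qZr mulN1r. Qed.
Lemma qBr x y z : q x (y - z) = q x y - q x z.
Proof. by rewrite qDr qNr. Qed.
Lemma qDl x y z : q (x + y) z = q x z + q y z.
Proof. by rewrite qconj qDr rmorphD /= -!qconj. Qed.
Lemma qZl c x y : q (c *: x) y = conjc c * q x y.
Proof. by rewrite qconj qZr rmorphM /= -qconj. Qed.
Lemma q0l x : q 0 x = 0.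
Proof. by rewrite qconj q0r conjc0. Qed.
Lemma qNl x y : q (- x) y = - q x y.
Proof. by rewrite -scaleN1r qZl rmorphN1 mulN1r. Qed.
Lemma qBl x y z : q (x - y) z = q x z - q y z.
Proof. by rewrite qDl qNl. Qed.

Lemma q_sumr I (s : seq I) (P : pred I) (F : I -> H) x :
  q x (\sum_(i <- s | P i) F i) = \sum_(i <- s | P i) q x (F i).
Proof.
elim: s => [|a s IH]; first by rewrite !big_nil q0r.
by rewrite !big_cons; case: (P a); rewrite ?qDr IH.
Qed.

Lemma q_suml I (s : seq I) (P : pred I) (F : I -> H) x :
  q (\sum_(i <- s | P i) F i) x = \sum_(i <- s | P i) q (F i) x.
Proof.
elim: s => [|a s IH]; first by rewrite !big_nil q0l.
by rewrite !big_cons; case: (P a); rewrite ?qDl IH.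
Qed.

End Forms.


Section CS.
Variable R : realType.
Local Notation C := R[i].

Lemma ge0_realC (z : C) : 0 <= z -> z = (complex.Re z)%:C.
Proof. by rewrite lecE /= => /andP[/eqP h _]; case: z h => a b /= ->. Qed.

Lemma conjc_ge0 (z : C) : 0 <= z -> conjc z = z.
Proof. by move=> /ge0_realC ->; rewrite conjc_real. Qed.

Variable H : lmodType C.
Variable q : H -> H -> C.
Hypothesis hq : sesq q.

Lemma CS x y : q x y * conjc (q x y) <= q x x * q y y.
Proof.
have hP := ge0_realC (qge0 hq x); have hQ := ge0_realC (qge0 hq y).
have key : forall r : R, 0 <= q x x - (r%:C * q y x) * q x y
   - conjc (r%:C * q y x) * q y x + conjc (r%:C * q y x) * (r%:C * q y x) * q y y.
  move=> r; have := qge0 hq (x - (r%:C * q y x) *: y).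
  rewrite (qBl hq) !(qBr hq) !(qZl hq) !(qZr hq).
  by congr (_ <= _); ring.
rewrite [q x y](qconj hq) conjcK.
move: key; rewrite hP hQ [q x y](qconj hq).
case: (q y x) => u v.
set P := complex.Re (q x x); set Q := complex.Re (q y y).
have P0 : 0 <= P by rewrite -ler0c -hP qge0.
have Q0 : 0 <= Q by rewrite -ler0c -hQ qge0.
move=> key.
have {}key : forall r : R, 0 <= P - 2 * r * (u^+2 + v^+2) + r^+2 * (u^+2+v^+2) * Q.
  by move=> r; move: (key r); rewrite lecE /=; simpc => /andP[_ h]; lra.
rewrite lecE /=; simpc; apply/andP; split; first by apply/eqP; lra.
set a := u^+2 + v^+2.
have a0 : 0 <= a by rewrite /a addr_ge0 // sqr_ge0.
suff : a <= P * Q by rewrite /a !expr2; lra.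
have [->|an0] := eqVneq a 0; first by rewrite mulr_ge0.
have ap : 0 < a by rewrite lt_def an0.
have [Qe|Qn0] := eqVneq Q 0.
  have := key ((P + 1) / (2 * a)); rewrite Qe mulr0 addr0.
  have -> : 2 * ((P + 1) / (2 * a)) * a = P + 1.
    by field.
  lra.
have Qp : 0 < Q by rewrite lt_def Qn0.
have := key (Q^-1).
have -> : 2 * Q^-1 * a = 2 * a / Q by field.
have -> : Q^-1 ^+ 2 * a * Q = a / Q by field.
move=> h; have : 0 <= (P - a / Q) * Q by rewrite mulr_ge0 //; lra.
rewrite mulrBl mulrAC -mulrA divff // mulr1; lra.
Qed.
End CS.


Section Hil.
Variable R : realType.
Local Notation C := R[i].
Variable H : lmodType C.
Variable ip : H -> H -> C.
Hypothesis hH : is_hilbert ip.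

Lemma ip_sesq : sesq ip.
Proof. by split; [exact: ip_linr hH | exact: ip_conj hH | exact: ip_ge0 hH]. Qed.
Local Notation hs := ip_sesq.

Definition nr x := complex.Re (ip x x).
Lemma nrE x : ip x x = (nr x)%:C.
Proof. exact/ge0_realC/(qge0 hs). Qed.
Lemma nr_ge0 x : 0 <= nr x.
Proof. by rewrite -ler0c -nrE (qge0 hs). Qed.
Lemma nr_eq0 x : nr x = 0 -> x = 0.
Proof. by move=> h; apply: (ip_eq0 hH); rewrite nrE h. Qed.

Lemma nrD x y : nr (x + y) <= 2 * nr x + 2 * nr y.
Proof.
have e : ip (x + y) (x + y) + ip (x - y) (x - y) = 2 * ip x x + 2 * ip y y.
  by rewrite !(qDl hs) !(qNl hs) !(qDr hs) !(qNr hs); ring.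
move: e; rewrite !nrE => /(congr1 (@complex.Re R)); simpc => /= e.
have := nr_ge0 (x - y); lra.
Qed.

Lemma nrB x y : nr (x - y) <= 2 * nr x + 2 * nr y.
Proof. by have := nrD x (- y); rewrite /nr (qNl hs) (qNr hs) opprK. Qed.

Lemma nrZ c x : nr (c *: x) = complex.Re (c * conjc c) * nr x.
Proof.
rewrite /nr (qZl hs) (qZr hs) nrE; have := mulcJ_ge0 c => /ge0_realC.
by rewrite mulrCA mulrA => ->; simpc.
Qed.

Lemma nrN x : nr (- x) = nr x.
Proof. by rewrite /nr (qNl hs) (qNr hs) opprK. Qed.

Lemma nr_sum I (s : seq I) (w : I -> H) :
  nr (\sum_(i <- s) w i) <= 2 ^+ size s * \sum_(i <- s) nr (w i).
Proof.
elim: s => [|a s IH]; first by rewrite !big_nil /nr (q0l hs); simpc.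
rewrite !big_cons /=; apply: le_trans (nrD _ _) _.
have h1 : 0 <= nr (w a) := nr_ge0 _.
have h2 : 0 <= \sum_(i <- s) nr (w i) by rewrite sumr_ge0 // => i _; exact: nr_ge0.
have h3 : 1 <= 2 ^+ size s :> R by rewrite exprn_ege1 // ler1n.
rewrite exprS; nra.
Qed.

End Hil.


Section Ops.
Variable R : realType.
Local Notation C := R[i].
Variable H : lmodType C.
Variable ip : H -> H -> C.
Hypothesis hH : is_hilbert ip.
Local Notation hs := (ip_sesq hH).

Variable T : H -> H.
Hypothesis hT : linear_op T.

Lemma TD x y : T (x + y) = T x + T y.
Proof. by have := hT 1 x y; rewrite !scale1r. Qed.
Lemma T0 : T 0 = 0.
Proof. by apply/(addrI (T 0)); rewrite -TD !addr0. Qed.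
Lemma TZ c x : T (c *: x) = c *: T x.
Proof. by have := hT c x 0; rewrite !addr0 T0 addr0. Qed.
Lemma TN x : T (- x) = - T x.
Proof. by rewrite -scaleN1r TZ scaleN1r. Qed.
Lemma TB x y : T (x - y) = T x - T y.
Proof. by rewrite TD TN. Qed.
Lemma T_sum I (s : seq I) (F : I -> H) : T (\sum_(i <- s) F i) = \sum_(i <- s) T (F i).
Proof. elim: s => [|a s IH]; by rewrite ?big_nil ?T0 // !big_cons TD IH. Qed.

Lemma lin_i (z1 z2 : C) : z1 + z2 = 0 -> 'i * z1 + - 'i * z2 = 0 -> z1 = 0.
Proof.
case: z1 => a b; case: z2 => c d; move=> /eqP; rewrite eq_complex /= => /andP[/eqP h1 /eqP h2].
move=> /eqP; rewrite eq_complex /=; simpc => /andP[/eqP h3 /eqP h4].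
by apply/eqP; rewrite eq_complex /=; apply/andP; split; apply/eqP; lra.
Qed.

Definition selfadj := forall x y, ip (T x) y = ip x (T y).

Hypothesis Tpos : forall x, 0 <= ip x (T x).

Lemma pos_selfadj : selfadj.
Proof.
pose b x y := ip x (T y) - ip (T x) y.
have b0 : forall x, b x x = 0.
  by move=> x; rewrite /b (qconj hs x (T x)) conjc_ge0 ?subrr.
have ec : forall c x y, c * b x y + conjc c * b y x = 0.
  move=> c x y; have := b0 (x + c *: y); have := b0 x; have := b0 y.
  rewrite /b TD TZ !(qDl hs) !(qDr hs) !(qZl hs) !(qZr hs) => h1 h2 h3.
  rewrite -h3; move: h1 h2 => /eqP; rewrite subr_eq0 => /eqP h1 /eqP; rewrite subr_eq0 => /eqP h2.
  by rewrite h1 h2; ring.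
move=> x y; have := ec 1 x y; have := ec 'i x y.
have hi : conjc 'i = - 'i :> C by apply/eqP; rewrite eq_complex /= ?oppr0 !eqxx.
have hii : 'i * 'i = -1 :> C by rewrite -expr2 sqr_i.
rewrite hi conjc1 !mul1r => h2 h1.
have /eqP := lin_i h1 h2; rewrite subr_eq0 => /eqP.
done.
Qed.
End Ops.


Section ONB.
Variable R : realType.
Local Notation C := R[i].
Variable H : lmodType C.
Variable ip : H -> H -> C.
Hypothesis hH : is_hilbert ip.
Local Notation hs := (ip_sesq hH).
Local Notation nr := (nr ip).

Lemma normalize x : x <> 0 -> exists c : C, ip (c *: x) (c *: x) = 1 /\ c <> 0.
Proof.
move=> x0; have np : 0 < nr x.
  rewrite lt_def nr_ge0 // andbT; apply/eqP => h; exact/x0/(nr_eq0 hH).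
set s := Num.sqrt (nr x).
have sp : 0 < s by rewrite sqrtr_gt0.
exists (s^-1)%:C; split; last first.
  by move=> /complexI /eqP; rewrite invr_eq0 gt_eqF.
rewrite nrE // nrZ // conjc_real -rmorphM /=.
have -> : s^-1 * s^-1 * nr x = 1.
  by rewrite -(sqr_sqrtr (nr_ge0 hH x)) -/s; field; rewrite gt_eqF.
done.
Qed.

Definition orthon (B : set H) :=
  (forall e, B e -> ip e e = 1) /\ (forall e f, B e -> B f -> e <> f -> ip e f = 0).

Lemma zorn_onb (S B0 : set H) :
  (forall c x, S x -> S (c *: x)) -> B0 `<=` S -> orthon B0 ->
  exists B, [/\ B0 `<=` B, B `<=` S, orthon B &
    forall x, S x -> (forall e, B e -> ip e x = 0) -> x = 0].
Proof.
move=> Sc B0S [B01 B0o].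
pose P := [set A : set H | A `<=` S /\ orthon (B0 `|` A)].
have [A [[AS [A1 Ao]] Amax]] : exists A, P A /\ forall B, A `<` B -> ~ P B.
  apply: Zorn_bigcup => F FP Ftot; split.
    by move=> x [X FX Xx]; exact: (FP X FX).1.
  split.
    move=> e [/B01 //|[X FX Xe]]; exact: (FP X FX).2.1 e (or_intror Xe).
  move=> e f [Be|[X FX Xe]] [Bf|[Y FY Yf]].
  - exact: B0o.
  - exact: (FP Y FY).2.2 e f (or_introl Be) (or_intror Yf).
  - exact: (FP X FX).2.2 e f (or_intror Xe) (or_introl Bf).
  - have [XY|YX] := Ftot X Y FX FY.
      exact: (FP Y FY).2.2 e f (or_intror (XY _ Xe)) (or_intror Yf).
    exact: (FP X FX).2.2 e f (or_intror Xe) (or_intror (YX _ Yf)).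
exists (B0 `|` A); split => //.
- by move=> x [/B0S|/AS].
- move=> x Sx xo; apply: contrapT => x0.
  have [c [cn c0]] := normalize x0.
  have ho : forall e, (B0 `|` A) e -> ip e (c *: x) = 0.
    by move=> e /xo; rewrite (qZr hs) => ->; rewrite mulr0.
  apply: (Amax (A `|` [set c *: x])); last split.
  + split; first by move=> y Ay; apply: or_introl.
    move=> /(_ (c *: x) (or_intror erefl)) Ax.
    have := ho _ (or_intror Ax); rewrite cn => /eqP; rewrite oner_eq0.
    done.
  + by move=> y [/AS|->]; [|exact: Sc].
  split.
    move=> e [Be|[Ae|->]]; [exact: A1 (or_introl Be)|exact: A1 (or_intror Ae)|exact: cn].
  have hB : forall e, B0 e \/ A e -> (B0 `|` A) e by [].
  move=> e f [Be|[Ae|->]] [Bf|[Af|->]] ef.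
  + exact: Ao (or_introl Be) (or_introl Bf) ef.
  + exact: Ao (or_introl Be) (or_intror Af) ef.
  + exact: ho (or_introl Be).
  + exact: Ao (or_intror Ae) (or_introl Bf) ef.
  + exact: Ao (or_intror Ae) (or_intror Af) ef.
  + exact: ho (or_intror Ae).
  + by rewrite (qconj hs) (ho _ (or_introl Bf)) conjc0.
  + by rewrite (qconj hs) (ho _ (or_intror Af)) conjc0.
  + by [].
Qed.
End ONB.


Section Sums.
Variable R : realType.
Local Notation C := R[i].

Lemma normC_parts (z : C) (e : R) :
  `|z| < e%:C -> `|complex.Re z| < e /\ `|complex.Im z| < e.
Proof.
rewrite normc_def ltcR => h; split; apply: le_lt_trans h.
  rewrite -sqrtr_sqr ler_sqrt ?lerDl ?sqr_ge0 //; exact: addr_ge0 (sqr_ge0 _) (sqr_ge0 _).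
rewrite -sqrtr_sqr ler_sqrt ?lerDr ?sqr_ge0 //; exact: addr_ge0 (sqr_ge0 _) (sqr_ge0 _).
Qed.

Lemma real_eq0 (x : R) : (forall e, 0 < e -> `|x| < e) -> x = 0.
Proof.
move=> h; apply/eqP; rewrite -normr_eq0; apply/eqP/le_anti.
rewrite normr_ge0 andbT; apply/ler_addgt0Pr => e e0; rewrite add0r; exact/ltW/h.
Qed.

Variable H : lmodType C.

Lemma sub_sum (f : H -> C) (s1 s2 : seq H) :
  uniq s1 -> uniq s2 -> {subset s1 <= s2} -> (forall x, x \in s2 -> 0 <= f x) ->
  \sum_(e <- s1) f e <= \sum_(e <- s2) f e.
Proof.
move=> u1 u2 sub f0.
have -> : \sum_(e <- s2) f e = \sum_(e <- s1) f e + \sum_(e <- s2 | e \notin s1) f e.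
  rewrite (bigID (fun e => e \in s1)) /=; congr (_ + _).
  rewrite -big_filter; apply: perm_big; apply: uniq_perm => //.
    exact: filter_uniq.
  by move=> x; rewrite mem_filter; case: (boolP (x \in s1)) => [/sub ->|]; rewrite ?andbT ?andbF.
rewrite lerDl big_seq_cond sumr_ge0 // => i /andP[i2 _]; exact: f0.
Qed.



Lemma sum_ge0 (f : H -> C) (s : seq H) : (forall x, x \in s -> 0 <= f x) ->
  0 <= \sum_(e <- s) f e.
Proof. by move=> h; rewrite big_seq sumr_ge0. Qed.

Lemma hs_le (B : set H) f s s1 : has_sum B f s -> (forall e, B e -> 0 <= f e) ->
  uniq s1 -> (forall e, e \in s1 -> B e) -> \sum_(e <- s1) f e <= s.
Proof.
move=> hsum f0 u1 B1.
have a0 : 0 <= \sum_(e <- s1) f e by apply: sum_ge0 => x /B1 /f0.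
move: (ge0_realC a0) hsum; set a := complex.Re _ => -> hsum.
case: s hsum => sr si hsum.
have key : forall e : R, 0 < e -> `|si| < e /\ a <= sr + e.
  move=> e e0; have e0' : 0 < e%:C by rewrite ltcR.
  have [s0 [u0 [B0 h]]] := hsum _ e0'.
  set s2 := undup (s1 ++ s0).
  have u2 : uniq s2 := undup_uniq _.
  have sub0 : forall x, x \in s0 -> x \in s2 by move=> x xs; rewrite mem_undup mem_cat xs orbT.
  have sub1 : {subset s1 <= s2} by move=> x xs; rewrite mem_undup mem_cat xs.
  have B2 : forall x, x \in s2 -> B x.
    by move=> x; rewrite mem_undup mem_cat => /orP[/B1|/B0].
  have hn := h s2 u2 sub0 B2.
  have ab : \sum_(e <- s1) f e <= \sum_(e <- s2) f e.
    by apply: sub_sum => // x /B2 /f0.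
  have b0 : 0 <= \sum_(e <- s2) f e by apply: sum_ge0 => x /B2 /f0.
  move: hn ab; rewrite (ge0_realC b0) (ge0_realC a0) -/a lecR.
  set b := complex.Re _ => hn ab.
  have [h1 h2] := normC_parts hn; move: h1 h2 => /=; simpc => /= h1 h2.
  split; first by move: h2; rewrite normrN.
  by move: h1; rewrite ltr_norml; lra.
have si0 : si = 0 by apply: real_eq0 => e /key [].
rewrite lecE /= si0 eqxx /=; apply/ler_addgt0Pr => e /key []; done.
Qed.

End Sums.


Section Conv.
Variable R : realType.
Local Notation C := R[i].
Variable H : lmodType C.
Variable ip : H -> H -> C.
Hypothesis hH : is_hilbert ip.
Local Notation hs := (ip_sesq hH).
Local Notation nr := (nr ip).

Lemma gt0_realC (z : C) : 0 < z -> z = (complex.Re z)%:C /\ 0 < complex.Re z.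
Proof.
move=> z0; split; first exact/ge0_realC/ltW.
by move: z0; rewrite ltcE /= => /andP[].
Qed.

Lemma hconvP u z : hconv ip u z <->
  forall e : R, 0 < e -> exists N, forall n, (N <= n)%N -> nr (u n - z) < e.
Proof.
split.
  move=> h e e0; have e0' : 0 < e%:C by rewrite ltcR.
  have [N hN] := h _ e0'; exists N => n /hN; by rewrite nrE // ltcR.
move=> h eps /gt0_realC [-> e0]; have [N hN] := h _ e0; exists N => n /hN.
by rewrite nrE // ltcR.
Qed.

Lemma hcauchyP u : (forall e : R, 0 < e -> exists N, forall n m, (N <= n)%N -> (N <= m)%N ->
   nr (u n - u m) < e) -> hcauchy ip u.
Proof.
move=> h eps /gt0_realC [-> e0]; have [N hN] := h _ e0; exists N => n m hn hm.
by rewrite nrE // ltcR hN.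
Qed.

Lemma nr_small_eq0 w : (forall e : R, 0 < e -> nr w < e) -> w = 0.
Proof.
move=> h; apply: (nr_eq0 hH); apply: real_eq0 => e /h.
by rewrite ger0_norm // nr_ge0.
Qed.

Lemma form_sesq (T : H -> H) : linear_op T -> selfadj ip T ->
  (forall x, 0 <= ip x (T x)) -> sesq (fun x y => ip x (T y)).
Proof.
move=> hT sa pos; split.
- by move=> c x y z; rewrite hT (qlin hs).
- by move=> x y /=; rewrite (qconj hs) sa.
- exact: pos.
Qed.

Definition qr (T : H -> H) x := complex.Re (ip x (T x)).

End Conv.


Section PI.
Variable R : realType.
Local Notation C := R[i].
Variable H : lmodType C.
Variable ip : H -> H -> C.
Hypothesis hH : is_hilbert ip.
Local Notation hs := (ip_sesq hH).
Local Notation nr := (nr ip).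

Variable T : H -> H.
Hypothesis hT : linear_op T.
Hypothesis Tsa : selfadj ip T.
Hypothesis Tpos : forall x, 0 <= ip x (T x).
Local Notation qr := (qr ip T).
Local Notation gs := (form_sesq hH hT Tsa Tpos).

Variable K : set H.
Hypothesis Klin : forall c x y, K x -> K y -> K (c *: x + y).
Hypothesis K0 : K 0.
Hypothesis KT : forall x, K x -> K (T x).
Hypothesis Kcl : forall u z, (forall k, K (u k)) -> hconv ip u z -> K z.
Hypothesis Kle : forall x, K x -> qr x <= nr x.

Lemma qrE x : ip x (T x) = (qr x)%:C.
Proof. exact/ge0_realC/Tpos. Qed.
Lemma qr_ge0 x : 0 <= qr x.
Proof. by rewrite -ler0c -qrE. Qed.

Lemma KB x y : K x -> K y -> K (x - y).
Proof.
move=> kx ky; rewrite -scaleN1r addrC; apply: Klin => //.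
Qed.

Lemma lemA y : K y -> nr (T y) <= qr y.
Proof.
move=> Ky; have := CS gs (T y) y => /=.
rewrite nrE // conjc_real !qrE -!rmorphM /= lecR => h.
have h1 := Kle (KT Ky); have h2 := qr_ge0 y; have h3 := nr_ge0 hH (T y).
have [e0|np] := eqVneq (nr (T y)) 0; first by rewrite e0.
have np' : 0 < nr (T y) by rewrite lt_def np h3.
have : nr (T y) * nr (T y) <= nr (T y) * qr y by apply: le_trans h _; rewrite ler_wpM2r.
by rewrite ler_pM2l.
Qed.

Lemma Tk_lin k : linear_op (iter k T).
Proof.
elim: k => [|k IH] c x y //=.
by rewrite IH hT.
Qed.

Lemma Tk_sa k x y : ip (iter k T x) y = ip x (iter k T y).
Proof.
elim: k x y => [|k IH] x y //=.
by rewrite Tsa IH -iterSr.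
Qed.

Lemma Tk_K k v : K v -> K (iter k T v).
Proof. by elim: k => [|k IH] //= /IH /KT. Qed.

Variable v : H.
Hypothesis Kv : K v.

Definition aa j := complex.Re (ip v (iter j T v)).

Lemma ip_iter i j : ip (iter i T v) (iter j T v) = ip v (iter (i + j) T v).
Proof. by rewrite Tk_sa -iterD. Qed.

Lemma aa_even i : aa (i + i) = nr (iter i T v).
Proof. by rewrite /aa -ip_iter. Qed.

Lemma aa_odd i : aa (i + i).+1 = qr (iter i T v).
Proof. by rewrite /aa -addnS -ip_iter iterS. Qed.

Lemma aa_real j : ip v (iter j T v) = (aa j)%:C.
Proof.
rewrite -[j](odd_double_half j) -addnn /aa; case: (odd j) => /=.
  rewrite ?add0n -iterS -addnS -ip_iter iterS; exact/ge0_realC/Tpos.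
by rewrite ?add0n -ip_iter; exact/ge0_realC/(qge0 hs).
Qed.

Lemma aa_dec j : aa j.+1 <= aa j.
Proof.
rewrite -[j](odd_double_half j) -addnn; case: (odd j) => /=.
  set i := j./2; change (aa (i + i).+2 <= aa (i + i).+1).
  rewrite aa_odd -addnS -addSn aa_even; apply: lemA; exact: Tk_K.
set i := j./2; change (aa (i + i).+1 <= aa (i + i)).
by rewrite aa_odd aa_even; apply: Kle; exact: Tk_K.
Qed.

Lemma aa_ge0 j : 0 <= aa j.
Proof.
rewrite -[j](odd_double_half j) -addnn; case: (odd j) => /=.
  set i := j./2; change (0 <= aa (i + i).+1); rewrite aa_odd; exact: qr_ge0.
set i := j./2; change (0 <= aa (i + i)); rewrite aa_even; exact: nr_ge0.
Qed.

Lemma aa_mono N j : (N <= j)%N -> aa j <= aa N.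
Proof.
move=> /subnK <-; elim: (j - N)%N => [|d IH] //=.
by rewrite addSn; exact: le_trans (aa_dec _) IH.
Qed.

Lemma nr_iterB k m : nr (iter k T v - iter m T v) = aa (k + k) + aa (m + m) - 2 * aa (k + m).
Proof.
rewrite /nr (qBl hs) !(qBr hs) !ip_iter (addnC m k) !aa_real; simpc => /=.
lra.
Qed.

Definition LL := inf (range aa).

Lemma LL_le j : LL <= aa j.
Proof.
apply: ge_inf; last by exists j.
by exists 0 => _ [i _ <-]; exact: aa_ge0.
Qed.

Lemma LL_near e : 0 < e -> exists N, forall j, (N <= j)%N -> aa j < LL + e.
Proof.
move=> e0; have : has_inf (range aa).
  split; first by exists (aa 0); exists 0.
  by exists 0 => _ [i _ <-]; exact: aa_ge0.
move=> /(inf_adherent e0) [_ [N _ <-] hN]; exists N => j /aa_mono h.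
exact: le_lt_trans h hN.
Qed.

Lemma T_contr w : K w -> nr (T w) <= nr w.
Proof. by move=> Kw; apply: le_trans (lemA Kw) (Kle Kw). Qed.

Lemma power_iter : exists z, [/\ K z, T z = z & hconv ip (fun k => iter k T v) z].
Proof.
have hc : hcauchy ip (fun k => iter k T v).
  apply: (hcauchyP hH) => e e0; have e20 : 0 < e / 2 by rewrite divr_gt0.
  have [N hN] := LL_near e20; exists N => n m hn hm.
  rewrite nr_iterB.
  have h1 := hN (n + n)%N (leq_trans hn (leq_addr _ _)).
  have h2 := hN (m + m)%N (leq_trans hm (leq_addr _ _)).
  have h3 := LL_le (n + m).
  lra.
have [z hz] := ip_complete hH hc.
have Kz : K z by apply: (Kcl _ hz) => k; exact: Tk_K.
exists z; split => //.
apply/eqP; rewrite -subr_eq0; apply/eqP; apply: (nr_small_eq0 hH) => e e0.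
have e40 : 0 < e / 4 by rewrite divr_gt0.
have [N hN] := (hconvP hH _ _).1 hz _ e40.
have h1 := hN N (leqnn N); have h2 := hN N.+1 (leqnSn N).
have -> : T z - z = (T z - T (iter N T v)) + (iter N.+1 T v - z).
  by rewrite iterS; rewrite addrA subrK.
apply: le_lt_trans (nrD hH _ _) _.
have h3 : nr (T z - T (iter N T v)) <= nr (iter N T v - z).
  rewrite -(nrN hH) opprB -(TB hT); apply: T_contr; apply: KB => //; exact: Tk_K.
lra.
Qed.

End PI.


Section Misc.
Variable R : realType.
Local Notation C := R[i].

Lemma bernoulli (eta : R) n : 0 <= eta <= 1 -> 1 - n%:R * eta <= (1 - eta) ^+ n.
Proof.
move=> /andP[h0 h1]; elim: n => [|n IH]; first by rewrite mul0r subr0 expr0.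
rewrite exprS -addn1 natrD.
have h2 : 0 <= 1 - eta by lra.
have h3 : (1 - eta) * (1 - n%:R * eta) <= (1 - eta) * (1 - eta) ^+ n by rewrite ler_wpM2l.
have h4 : 0 <= n%:R * eta * eta by rewrite !mulr_ge0 ?ler0n.
nra.
Qed.

Lemma eventually_seq (T : eqType) (s : seq T) (Q : T -> nat -> Prop) :
  (forall f, f \in s -> exists N, forall k, (N <= k)%N -> Q f k) ->
  exists N, forall f k, f \in s -> (N <= k)%N -> Q f k.
Proof.
elim: s => [|a s IH] h; first by exists 0%N.
have [N1 h1] := h a (mem_head _ _).
have [N2 h2] : exists N, forall f k, f \in s -> (N <= k)%N -> Q f k.
  by apply: IH => f fs; apply: h; rewrite in_cons fs orbT.
exists (maxn N1 N2) => f k; rewrite in_cons => /orP[/eqP ->|fs] hk.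
  by apply: h1; apply: leq_trans hk; exact: leq_maxl.
by apply: h2 => //; apply: leq_trans hk; exact: leq_maxr.
Qed.

Variable H : lmodType C.
Variable ip : H -> H -> C.
Hypothesis hH : is_hilbert ip.
Local Notation hs := (ip_sesq hH).
Local Notation nr := (nr ip).

Lemma orth_coef (s0 : seq H) (c : H -> C) f : uniq s0 -> orthon ip [set e | e \in s0] ->
  f \in s0 -> \sum_(g <- s0) c g * ip f g = c f.
Proof.
move=> u [o1 o2] fs; rewrite (bigD1_seq f) //= o1 // mulr1 big_seq_cond big1 ?addr0 //.
by move=> g /andP[gs /eqP gf]; rewrite o2 ?mulr0 // => h; apply: gf.
Qed.

End Misc.


Section CA.
Variable R : realType.
Local Notation C := R[i].
Variable H : lmodType C.
Variable ip : H -> H -> C.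
Hypothesis hH : is_hilbert ip.
Local Notation hs := (ip_sesq hH).
Local Notation nr := (nr ip).

Variable T : H -> H.
Hypothesis hT : linear_op T.
Hypothesis Tsa : selfadj ip T.
Hypothesis Tpos : forall x, 0 <= ip x (T x).
Local Notation qrT := (qr ip T).

Variable K : set H.
Hypothesis Klin : forall c x y, K x -> K y -> K (c *: x + y).
Hypothesis K0 : K 0.
Hypothesis KT : forall x, K x -> K (T x).
Hypothesis Kle : forall x, K x -> qrT x <= nr x.

Lemma K_sum (s0 : seq H) (c : H -> C) :
  (forall f, f \in s0 -> c f <> 0 -> K f) -> K (\sum_(f <- s0) c f *: f).
Proof.
elim: s0 => [|a s IH] h; first by rewrite big_nil.
rewrite big_cons; have Ks : K (\sum_(f <- s) c f *: f).
  by apply: IH => f fs; apply: h; rewrite in_cons fs orbT.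
have [->|ca] := eqVneq (c a) 0; first by rewrite scale0r add0r.
by apply: Klin => //; apply: h (mem_head _ _) _; apply/eqP.
Qed.

Lemma iter_contr j w : K w -> nr (iter j T w) <= nr w.
Proof.
move=> Kw; elim: j => [|j IH] //=.
apply: le_trans IH; apply: (T_contr hH hT Tsa Tpos KT Kle); exact: Tk_K.
Qed.

Lemma pow2_bound x p : K x -> nr x = 1 ->
  qrT x ^+ (2 ^ p.+1) <= nr (iter (2 ^ p) T x).
Proof.
move=> Kx nx.
have sq : forall j, aa ip T x j ^+ 2 <= aa ip T x (j + j).
  move=> j; have := CS hs x (iter j T x).
  rewrite (aa_real hH Tsa Tpos) (ip_iter Tsa) (aa_real hH Tsa Tpos) nrE // nx.
  by rewrite conjc_real -!rmorphM /= lecR mul1r expr2.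
have a1 : aa ip T x 1 = qrT x by [].
have a0 := aa_ge0 hH Tsa Tpos x.
rewrite -(aa_even Tsa) -a1 addnn -mul2n -expnS.
elim: p => [|p IH]; first by rewrite expn1; exact: sq 1%N.
rewrite [(2 ^ p.+2)%N]expnS mul2n -addnn exprD.
apply: le_trans (sq _); rewrite expr2.
by apply: ler_pM => //; rewrite exprn_ge0.
Qed.

Lemma sum_le_const (s : seq H) (g : H -> R) d :
  (forall f, f \in s -> g f <= d) -> \sum_(f <- s) g f <= (size s)%:R * d.
Proof.
elim: s => [|a s IH] h; first by rewrite big_nil mul0r.
rewrite big_cons /= -addn1 natrD mulrDl mul1r addrC lerD //.
  by apply: IH => f fs; apply: h; rewrite in_cons fs orbT.
by apply: h; rewrite mem_head.
Qed.


Hypothesis Tsup : forall eta : R, 0 < eta -> exists x, [/\ K x, nr x = 1 & 1 - eta < qrT x].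
Hypothesis Ttail : exists s0 : seq H, [/\ uniq s0, orthon ip [set e | e \in s0],
   (forall f x, f \in s0 -> K x -> ip f x <> 0 -> K f) &
   forall y, K y -> (forall f, f \in s0 -> ip f y = 0) -> qrT y <= nr y / 8].
Hypothesis Tzero : forall v, K v -> hconv ip (fun k => iter k T v) 0.

Lemma lecRe (a b : C) : a <= b -> complex.Re a <= complex.Re b.
Proof. by rewrite lecE => /andP[]. Qed.

Lemma CA : False.
Proof.
have [s0 [u0 o0 hK htail]] := Ttail.
set m := size s0.
have m0 : 0 <= m%:R :> R by exact: ler0n.
set Q : R := 2 ^+ m.
have Q0 : 0 < Q by rewrite exprn_gt0.
set d : R := (8 * Q * (m%:R + 1))^-1.
have d0 : 0 < d.
  by rewrite invr_gt0 !mulr_gt0 //; lra.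
have [N hN] : exists N, forall f k, f \in s0 -> (N <= k)%N -> K f -> nr (iter k T f) < d.
  apply: eventually_seq => f fs.
  have [Kf|nKf] := pselect (K f); last by exists 0%N => k _ /nKf.
  have [N hN] := (hconvP hH _ _).1 (Tzero Kf) _ d0.
  by exists N => k /hN; rewrite subr0.
set k := (2 ^ N)%N.
have Nk : (N <= k)%N by apply: ltnW; apply: ltn_expl.
have k1 : (0 < k)%N by rewrite expn_gt0.
set n2 := (2 ^ N.+1)%N.
have n20 : 1 <= n2%:R :> R by rewrite ler1n expn_gt0.
set eta : R := (4 * n2%:R)^-1.
have eta0 : 0 < eta by rewrite invr_gt0 mulr_gt0 //; lra.
have [x [Kx nx hx]] := Tsup eta0.
have low : 3 / 4 <= nr (iter k T x).
  apply: le_trans _ (pow2_bound N Kx nx).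
  have e1 : eta <= 1.
    rewrite /eta invf_le1; lra.
  have hb := bernoulli n2 (_ : 0 <= eta <= 1).
  have hb' : 1 - n2%:R * eta <= (1 - eta) ^+ n2 by apply: hb; rewrite (ltW eta0) e1.
  have e2 : n2%:R * eta = 1 / 4 by rewrite /eta; field; lra.
  have e3 : (1 - eta) ^+ n2 <= qrT x ^+ n2.
    have q0 : 0 <= qrT x by lra.
    apply: lerXn2r; rewrite ?nnegrE //; lra.
  lra.
set c := fun f => ip f x.
set Px := \sum_(f <- s0) c f *: f.
set y := x - Px.
have ey : y = x - Px by [].
clearbody y.
have KPx : K Px by apply: K_sum => f fs cf; exact: hK f x fs Kx cf.
have Ky : K y by rewrite ey; apply: KB.
have yo : forall f, f \in s0 -> ip f y = 0.
  move=> f fs; rewrite ey (qBr hs) /Px (q_sumr hs).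
  under eq_bigr do rewrite (qZr hs).
  by rewrite (orth_coef c u0 o0 fs) /c subrr.
have ny : nr y <= 1.
  have ePy : ip Px y = 0.
    rewrite /Px (q_suml hs) big_seq big1 // => f fs.
    by rewrite (qZl hs) yo // mulr0.
  have eyP : ip y Px = 0 by rewrite (qconj hs) ePy conjc0.
  have ex : x = Px + y by rewrite ey addrC subrK.
  have : ip x x = ip Px Px + ip y y.
    by rewrite {1 2}ex !(qDl hs) !(qDr hs) ePy eyP addr0 add0r.
  rewrite !nrE // nx -rmorphD /= => /complexI.
  have := nr_ge0 hH Px; lra.
have cge0 : forall f, 0 <= complex.Re (c f * conjc (c f)).
  by move=> f; have := mulcJ_ge0 (c f) => /lecRe.
have cf1 : forall f, f \in s0 -> complex.Re (c f * conjc (c f)) <= 1.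
  move=> f fs; have := CS hs f x; rewrite o0.1 // nrE // nx mul1r => /lecRe.
  by [].
have decomp : iter k T x = \sum_(f <- s0) c f *: iter k T f + iter k T y.
  have ex : x = Px + y by rewrite ey addrC subrK.
  rewrite {1}ex (TD (Tk_lin hT k)) (T_sum (Tk_lin hT k)).
  by under eq_bigr do rewrite (TZ (Tk_lin hT k)).
have up1 : nr (\sum_(f <- s0) c f *: iter k T f) <= 1 / 8.
  apply: le_trans (nr_sum hH _ _) _.
  have : \sum_(f <- s0) nr (c f *: iter k T f) <= m%:R * d.
    apply: sum_le_const => f fs; rewrite nrZ //.
    have [cf0|cfn] := eqVneq (c f) 0.
      by rewrite cf0 mul0r /= mul0r ltW.
    have Kf : K f by apply: (hK f x fs Kx) => h; move: cfn; rewrite /c h eqxx.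
    have := hN f k fs Nk Kf => h.
    have := cge0 f; have := cf1 f fs; have := nr_ge0 hH (iter k T f); nra.
  move=> h; rewrite -/m -/Q.
  have eQ : Q * (m%:R * d) = 1 / 8 - Q * d.
    rewrite /d; field; lra.
  have : 0 <= Q * d by rewrite mulr_ge0 // ltW.
  have : Q * (\sum_(f <- s0) nr (c f *: iter k T f)) <= Q * (m%:R * d) by rewrite ler_wpM2l // ltW.
  lra.
have up2 : nr (iter k T y) <= 1 / 8.
  have -> : k = (k.-1).+1 by rewrite prednK.
  rewrite iterSr; apply: le_trans (iter_contr _ (KT Ky)) _.
  apply: le_trans (lemA hH hT Tsa Tpos KT Kle Ky) _.
  apply: le_trans (htail y Ky yo) _; lra.
have := nrD hH (\sum_(f <- s0) c f *: iter k T f) (iter k T y).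
rewrite -decomp; lra.
Qed.

End CA.


Section Spec.
Variable R : realType.
Local Notation C := R[i].

Lemma ReD (a b : C) : complex.Re (a + b) = complex.Re a + complex.Re b.
Proof. by case: a; case: b. Qed.
Lemma ReB (a b : C) : complex.Re (a - b) = complex.Re a - complex.Re b.
Proof. by case: a; case: b. Qed.

Variable H : lmodType C.
Variable ip : H -> H -> C.
Hypothesis hH : is_hilbert ip.
Local Notation hs := (ip_sesq hH).
Local Notation nr := (nr ip).
Variable alpha : H -> H.
Hypothesis hst : state ip alpha.
Let alin : linear_op alpha := hst.1.1.
Let apos : forall x, 0 <= ip x (alpha x) := hst.2.1.
Let atr : trace_is ip alpha 1 := hst.2.2.
Let asa := pos_selfadj hH alin apos.
Local Notation qa := (qr ip alpha).

Lemma qaE x : ip x (alpha x) = (qa x)%:C.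
Proof. exact/ge0_realC/apos. Qed.

Lemma qaZ c x : qa (c *: x) = complex.Re (c * conjc c) * qa x.
Proof.
rewrite /qr (TZ alin) (qZl hs) (qZr hs) qaE; have := mulcJ_ge0 c => /ge0_realC.
by rewrite mulrCA mulrA => ->; simpc.
Qed.

Lemma onb_of (B : set H) : orthon ip B ->
  (forall x, setT x -> (forall e, B e -> ip e x = 0) -> x = 0) -> onb ip B.
Proof. by move=> [o1 o2] c; split => //; split => // x; apply: c. Qed.

Lemma trace_le s0 y : uniq s0 -> orthon ip [set e | e \in s0] ->
  (forall e, e \in s0 -> ip e y = 0) ->
  qa y <= (1 - complex.Re (\sum_(e <- s0) ip e (alpha e))) * nr y.
Proof.
move=> u0 [o1 o2] yo.
have [->|y0] := eqVneq y 0.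
  by rewrite /qr /nr !(q0l hs) /= mulr0.
have y0' : y <> 0 by move/eqP: y0.
have [c [cn c0]] := normalize hH y0'.
set yh := c *: y.
have yho : forall e, e \in s0 -> ip e yh = 0 by move=> e /yo h; rewrite (qZr hs) h mulr0.
have yns : yh \notin s0.
  by apply/negP => /yho; rewrite cn => /eqP; rewrite oner_eq0.
have oB0 : orthon ip [set e | e \in yh :: s0].
  split.
    by move=> e /=; rewrite in_cons => /orP[/eqP ->|/o1].
  move=> e f /=; rewrite !in_cons => /orP[/eqP ->|es] /orP[/eqP ->|fs] ef //.
  - by rewrite (qconj hs) yho // conjc0.
  - by rewrite yho.
  - exact: o2.
have [B [B0B _ oB cB]] := zorn_onb hH (S := setT) (fun _ _ _ => I) (fun _ _ => I) oB0.
have hsB := atr (onb_of oB cB).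
have uy : uniq (yh :: s0) by rewrite /= yns u0.
have := hs_le hsB (fun e _ => apos e) uy (fun e es => B0B e es).
rewrite big_cons => /lecRe.
rewrite ReD -/(qr ip alpha yh) qaZ /=.
have := nrZ hH c y; rewrite /nr cn /= => hk.
set k := complex.Re (c * conjc c) in hk *.
set S := complex.Re _.
have := nr_ge0 hH y; have := qr_ge0 apos y => h1 h2 h3.
have -> : qr ip alpha y = (k * qr ip alpha y) * nr y by rewrite -mulrA mulrCA -hk mulr1.
by rewrite ler_wpM2r //; lra.
Qed.


Lemma qa_le y : qa y <= nr y.
Proof.
have := @trace_le [::] y isT (conj (fun e (h : e \in [::]) => match notF h with end)
  (fun e f (h : e \in [::]) => match notF h with end)) (fun e (h : e \in [::]) => match notF h with end).
by rewrite big_nil /= subr0 mul1r.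
Qed.

Lemma tail (B : set H) : onb ip B -> forall e : R, 0 < e -> exists s0, [/\ uniq s0,
  (forall f, f \in s0 -> B f) & forall y, (forall f, f \in s0 -> ip f y = 0) -> qa y <= e * nr y].
Proof.
move=> oB e e0; have e0' : 0 < e%:C by rewrite ltcR.
have [s0 [u0 [B0 h]]] := atr oB e0'.
exists s0; split => // y yo.
have := h s0 u0 (fun _ x => x) B0 => /normC_parts [h1 _].
move: h1; rewrite ReB /= ltr_norml => /andP[h1 h2].
have o0 : orthon ip [set e | e \in s0].
  by split; [move=> f /B0 /oB.1|move=> f g /B0 Bf /B0 Bg; exact: oB.2.1].
apply: le_trans (trace_le u0 o0 yo) _; apply: ler_wpM2r; first exact: nr_ge0.
lra.
Qed.

Lemma nr1 x : ip x x = 1 -> nr x = 1.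
Proof. by rewrite /nr => ->. Qed.

Lemma eig_onb : exists E, onb ip E /\ forall e, E e -> alpha e = ip e (alpha e) *: e.
Proof.
pose Eig := [set x | exists mu : C, alpha x = mu *: x].
have EigZ : forall c x, Eig x -> Eig (c *: x).
  by move=> c x [mu hm]; exists mu; rewrite (TZ alin) hm !scalerA mulrC.
have o0 : orthon ip set0 by split.
have [E [_ EEig oE cE]] := zorn_onb hH EigZ (sub0set _) o0.
have Eeig : forall e, E e -> alpha e = ip e (alpha e) *: e.
  by move=> e Ee; have [mu hm] := EEig e Ee; rewrite hm (qZr hs) oE.1 // mulr1.
exists E; split => //; apply: onb_of => // x0 _ xo.
apply: contrapT => x00.
pose K := [set x | forall e, E e -> ip e x = 0].
suff [z [Kz z0 Ez]] : exists z, [/\ K z, z <> 0 & Eig z] by apply/z0/cE.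
have Klin : forall c x y, K x -> K y -> K (c *: x + y).
  by move=> c u w Ku Kw e Ee; rewrite (qlin hs) Ku // Kw // mulr0 addr0.
have K0 : K 0 by move=> e _; rewrite (q0r hs).
have KZ : forall c x, K x -> K (c *: x).
  by move=> c u Ku; rewrite -[c *: u]addr0; apply: Klin.
have Ka : forall x, K x -> K (alpha x).
  by move=> u Ku e Ee; rewrite -asa Eeig // (qZl hs) Ku // mulr0.
have Kcl : forall u z, (forall k, K (u k)) -> hconv ip u z -> K z.
  move=> uu zz Kuu hzz e Ee.
  set w := ip e zz.
  have ww : w * conjc w = 0.
    have hw0 := mulcJ_ge0 w.
    rewrite (ge0_realC hw0); congr (_ %:C); apply: real_eq0 => eps eps0.
    have [N hN] := (hconvP hH _ _).1 hzz _ eps0.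
    have := hN N (leqnn N); have := CS hs e (zz - uu N).
    have -> : ip e (zz - uu N) = w by rewrite (qBr hs) (Kuu N e Ee) subr0.
    rewrite oE.1 // mul1r nrE // -(nrN hH) opprB => /lecRe /= h1 h2.
    have := lecRe hw0; rewrite /= => h3.
    rewrite ger0_norm //; lra.
  by move/eqP: ww; rewrite mulf_eq0 conjc_eq0 orbb => /eqP.
have Kx0 : K x0 by [].
have qa0 := qr_ge0 apos x0.
have [qz|qp] := eqVneq (qa x0) 0.
  exists x0; split => //; exists 0; rewrite scale0r.
  have gs := form_sesq hH alin asa apos.
  have := CS gs (alpha x0) x0 => /=.
  rewrite nrE // !qaE qz mulr0 conjc_real -rmorphM /= lecR => h.
  apply: (nr_eq0 hH); have := nr_ge0 hH (alpha x0); nra.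
have qp' : 0 < qa x0 by rewrite lt_def qp qa0.
have nx0 : 0 < nr x0.
  rewrite lt_def nr_ge0 // andbT; apply/eqP => h; exact/x00/(nr_eq0 hH).
pose S := [set r | exists y, [/\ K y, 0 < nr y & r = qa y / nr y]].
have hsup : has_sup S.
  split; first by exists (qa x0 / nr x0); exists x0.
  exists 1 => _ [y [_ ny ->]]; rewrite ler_pdivrMr // mul1r; exact: qa_le.
set lam := sup S.
have lam0 : 0 < lam.
  apply: lt_le_trans (sup_upper_bound hsup _); last by exists x0.
  by rewrite divr_gt0.
have Klam : forall y, K y -> qa y <= lam * nr y.
  move=> y Ky; have [ny0|ny] := eqVneq (nr y) 0.
    by rewrite ny0 (nr_eq0 hH ny0) mulr0 /qr (q0l hs).
  have nyp : 0 < nr y by rewrite lt_def ny nr_ge0.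
  rewrite -ler_pdivrMr //; apply: sup_upper_bound => //; by exists y.
pose T := fun v => (lam^-1)%:C *: alpha v.
have hT : linear_op T.
  by move=> c u w; rewrite /T alin scalerDr !scalerA mulrC.
have Tsa : selfadj ip T.
  by move=> u w; rewrite /T (qZl hs) (qZr hs) conjc_real asa.
have Tpos : forall u, 0 <= ip u (T u).
  by move=> u; rewrite /T (qZr hs) mulr_ge0 // ?ler0c ?invr_ge0 ?ltW.
have qT : forall u, qr ip T u = lam^-1 * qa u.
  by move=> u; rewrite /qr /T (qZr hs) qaE; simpc.
have Kle : forall u, K u -> qr ip T u <= nr u.
  move=> u Ku; rewrite qT ler_pdivrMl //; exact: Klam.
have KT : forall u, K u -> K (T u) by move=> u Ku; apply/KZ/Ka.
have [[v [Kv [z [[Kz Tz _] zn0]]]]|allz] :=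
  pselect (exists v, K v /\ exists z, [/\ K z, T z = z & hconv ip (fun k => iter k T v) z] /\ z <> 0).
  exists z; split => //; exists lam%:C.
  move: Tz; rewrite /T => Tz; rewrite -{2}Tz scalerA -rmorphM /= divff ?scale1r //.
  by rewrite gt_eqF.
have Tzero : forall v, K v -> hconv ip (fun k => iter k T v) 0.
  move=> v Kv; have [z [Kz Tz hz]] := power_iter hH hT Tsa Tpos Klin KT Kcl Kle Kv.
  have [zz|zn] := pselect (z = 0); first by rewrite -zz.
  by exfalso; apply: allz; exists v; split => //; exists z.
have Tsup : forall eta : R, 0 < eta -> exists x, [/\ K x, nr x = 1 & 1 - eta < qr ip T x].
  move=> eta eta0; have le0 : 0 < lam * eta by rewrite mulr_gt0.
  have [_ [y [Ky ny ->]] hr] := sup_adherent le0 hsup.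
  have y0 : y <> 0 by move=> y0; move: ny; rewrite y0 /nr (q0l hs) /= ltxx.
  have [c [cn _]] := normalize hH y0.
  exists (c *: y); split; [exact: KZ | exact: nr1 |].
  rewrite qT qaZ.
  have := nrZ hH c y; rewrite nr1 // => hk.
  have -> : complex.Re (c * conjc c) = (nr y)^-1.
    by apply/(mulIf (_ : nr y != 0)); rewrite ?gt_eqF // -hk mulVf // gt_eqF.
  move: hr; rewrite -/lam => hr.
  rewrite [X in _ < X](_ : _ = qa y / nr y / lam); last by rewrite mulrC (mulrC (nr y)^-1).
  rewrite ltr_pdivlMr //; lra.
have Ttail : exists s0 : seq H, [/\ uniq s0, orthon ip [set e | e \in s0],
   (forall f x, f \in s0 -> K x -> ip f x <> 0 -> K f) &
   forall y, K y -> (forall f, f \in s0 -> ip f y = 0) -> qr ip T y <= nr y / 8].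
  have [B' [EB' _ oB' cB']] := zorn_onb hH (S := setT) (fun _ _ _ => I) (fun _ _ => I) oE.
  have l8 : 0 < lam / 8 by rewrite divr_gt0.
  have [s0 [u0 B0 ht]] := tail (onb_of oB' cB') l8.
  exists s0; split => //.
  - by split; [move=> f /B0 /oB'.1|move=> f g /B0 Bf /B0 Bg; exact: oB'.2].
  - move=> f u fs Ku fu e Ee.
    have [Ef|nEf] := pselect (E f); first by exfalso; apply: fu; exact: Ku.
    apply: oB'.2 (EB' _ Ee) (B0 _ fs) _ => ef; apply: nEf; by rewrite -ef.
  - move=> y Ky yo; rewrite qT.
    have := ht y yo => h.
    have h2 : lam^-1 * qa y <= lam^-1 * (lam / 8 * nr y) by rewrite ler_wpM2l // invr_ge0 ltW.
    apply: le_trans h2 _; rewrite le_eqVlt; apply/orP; left; apply/eqP.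
    by field; rewrite gt_eqF.
by exfalso; exact: (CA hH hT Tsa Tpos Klin K0 KT Kle Tsup Ttail Tzero).
Qed.

End Spec.


Section TB.
Variable R : realType.
Local Notation C := R[i].
Variable H : lmodType C.
Variable ip : H -> H -> C.
Hypothesis hH : is_hilbert ip.
Local Notation hs := (ip_sesq hH).
Local Notation nr := (nr ip).
Variable alpha : H -> H.
Hypothesis hst : state ip alpha.
Let alin : linear_op alpha := hst.1.1.
Let apos : forall x, 0 <= ip x (alpha x) := hst.2.1.
Let atr : trace_is ip alpha 1 := hst.2.2.
Let asa := pos_selfadj hH alin apos.
Local Notation qa := (qr ip alpha).

Lemma trace_bound (a : H -> H) (t : C) : effect ip a -> trace_is ip (alpha \o a) t ->
  0 <= t /\ t <= 1.
Proof.
move=> [_ ea] ht.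
have [E [oE Eeig]] := eig_onb hH hst.
have hs1 := atr oE; have hst' := ht E oE.
pose ra e := complex.Re (ip e (a e)).
have raE : forall e, ip e (a e) = (ra e)%:C by move=> e; exact/ge0_realC/(ea e).1.
have term : forall e, E e -> ip e ((alpha \o a) e) = (qa e * ra e)%:C.
  move=> e Ee /=; rewrite -asa Eeig // (qZl hs) qaE // conjc_real raE.
  by rewrite -rmorphM.
have ra01 : forall e, E e -> 0 <= ra e <= 1.
  move=> e Ee; have [h1 h2] := ea e; move: h1 h2; rewrite raE oE.1 // -[1]/(1%:C) !lecR.
  by move=> -> ->.
case: t ht hst' => tr ti ht hst'.
have key : forall eps : R, 0 < eps -> `|ti| < eps /\ - eps < tr < 1 + eps.
  move=> eps e0; have e0' : 0 < eps%:C by rewrite ltcR.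
  have [s0 [u0 [B0 h]]] := hst' _ e0'.
  have := h s0 u0 (fun _ x => x) B0.
  rewrite big_seq (eq_bigr (fun e => (qa e * ra e)%:C)); last by move=> e /B0 /term.
  rewrite -big_seq -rmorph_sum /=.
  set sig := \sum_(e <- s0) _.
  have sig0 : 0 <= sig.
    rewrite /sig big_seq sumr_ge0 // => e /B0 Ee.
    by rewrite mulr_ge0 ?qr_ge0 // (andP (ra01 e Ee)).1.
  have sig1 : sig <= 1.
    have := hs_le hs1 (fun e _ => apos e) u0 B0 => /lecRe.
    rewrite (big_morph (@complex.Re R) (@ReD R) (erefl _)) /= => h1.
    apply: le_trans h1; rewrite /sig big_seq [X in _ <= X]big_seq; apply: ler_sum => e /B0 Ee.
    rewrite -/(qr ip alpha e); have := ra01 e Ee; have := qr_ge0 apos e => h2 /andP[h3 h4].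
    by rewrite ler_piMr.
  move=> /normC_parts [] /=; simpc => /= h1 h2.
  split; first by move: h2; rewrite normrN.
  move: h1; rewrite ltr_norml => /andP[h3 h4]; apply/andP; split; lra.
have ti0 : ti = 0 by apply: real_eq0 => e /key [].
have tr0 : 0 <= tr.
  apply/ler_addgt0Pl => e /key [_ /andP[h _]]; lra.
have tr1 : tr <= 1.
  apply/ler_addgt0Pr => e /key [_ /andP[_ h]]; lra.
by rewrite !lecE /= ti0 !eqxx tr0 tr1.
Qed.

End TB.


Section Main.
Variable R : realType.
Local Notation C := R[i].
Variable H : lmodType C.
Variable ip : H -> H -> C.
Hypothesis hH : is_hilbert ip.
Local Notation hs := (ip_sesq hH).
Local Notation nr := (nr ip).

Lemma realC01 (c : C) : 0 <= c -> c <= 1 -> exists r : R, [/\ c = r%:C, 0 <= r & r <= 1].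
Proof.
move=> c0 c1; exists (complex.Re c); rewrite -ler0c -lecR -ge0_realC //; split => //.
Qed.

Lemma effect_scale a c : effect ip a -> 0 <= c -> c <= 1 -> effect ip (fun x => c *: a x).
Proof.
move=> [[alin [M [M0 hM]]] ea] c0 c1.
have [r [-> r0 r1]] := realC01 c0 c1.
have rr : (r * r)%:C <= 1 by rewrite -[1]/(1%:C) lecR; nra.
split; first split.
- by move=> k x y; rewrite alin scalerDr !scalerA mulrC.
- exists M; split => // x; rewrite (qZl hs) (qZr hs) conjc_real mulrA -rmorphM /=.
  apply: le_trans (hM x); rewrite -[X in _ <= X]mul1r; apply: ler_wpM2r => //.
  exact: (qge0 hs).
- move=> x; rewrite (qZr hs); have [h1 h2] := ea x; split.
    by rewrite mulr_ge0 // ler0c.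
  apply: le_trans h2; rewrite -[X in _ <= X]mul1r; apply: ler_wpM2r => //.
  by rewrite -[1]/(1%:C) lecR.
Qed.

Lemma effect_id : effect ip id.
Proof.
split; first split.
- by [].
- by exists 1; split => // x; rewrite mul1r.
- by move=> x; split => //; exact: (qge0 hs).
Qed.

Lemma effect_compl a : effect ip a -> effect ip (fun x => x - a x).
Proof.
move=> [[alin [M [M0 hM]]] ea].
have [Mr [eM Mr0]] : exists Mr : R, M = Mr%:C /\ 0 <= Mr.
  by exists (complex.Re M); split; [exact: ge0_realC|rewrite -ler0c -ge0_realC].
split; first split.
- by move=> k x y; rewrite alin scalerBr opprD !addrA; congr (_ + _); rewrite addrAC.
- exists (2 + 2 * Mr)%:C; split; first by rewrite ler0c; lra.
  move=> x; rewrite !nrE // -rmorphM /= lecR.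
  have := hM x; rewrite !nrE // eM -rmorphM /= lecR => h.
  apply: le_trans (nrB hH _ _) _; lra.
- move=> x; have [h1 h2] := ea x; rewrite (qBr hs); split.
    by rewrite subr_ge0.
  by rewrite gerBl.
Qed.

Lemma has_sum_sub (B : set H) f g s u : has_sum B f s -> has_sum B g u ->
  has_sum B (fun e => f e - g e) (s - u).
Proof.
move=> hf hg eps e0; have e2 : 0 < eps / 2 by rewrite divr_gt0.
have [s0 [u0 [B0 h0]]] := hf _ e2; have [s1 [u1 [B1 h1]]] := hg _ e2.
exists (undup (s0 ++ s1)); split; first exact: undup_uniq.
split.
  by move=> e; rewrite mem_undup mem_cat => /orP[/B0|/B1].
move=> s3 u3 sub3 B3; rewrite sumrB.
have -> : \sum_(e <- s3) f e - \sum_(e <- s3) g e - (s - u) =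
  (\sum_(e <- s3) f e - s) - (\sum_(e <- s3) g e - u) by ring.
apply: le_lt_trans (ler_normB _ _) _.
have -> : eps = eps / 2 + eps / 2 by field.
apply: ltrD.
  by apply: h0 => // e es; apply: sub3; rewrite mem_undup mem_cat es.
by apply: h1 => // e es; apply: sub3; rewrite mem_undup mem_cat es orbT.
Qed.

Lemma has_sum_scale (B : set H) f s (c : C) : has_sum B f s ->
  has_sum B (fun e => c * f e) (c * s).
Proof.
move=> hf eps e0.
have cp : 0 < `|c| + 1 by rewrite ltr_wpDl.
have e2 : 0 < eps / (`|c| + 1) by rewrite divr_gt0.
have [s0 [u0 [B0 h0]]] := hf _ e2.
exists s0; split => //; split => // s1 u1 sub1 B1.
rewrite -mulr_sumr -mulrBr normrM.
have hl := h0 s1 u1 sub1 B1.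
apply: le_lt_trans (_ : _ <= (`|c| + 1) * `|\sum_(i <- s1) f i - s|) _.
  by apply: ler_wpM2r; rewrite ?lerDl.
by rewrite -ltr_pdivlMl // mulrC.
Qed.

Lemma sub_obs_scale (d : measure_display) (Omega : measurableType d)
  (M : set Omega -> H -> H) c :
  sub_observable ip M -> 0 <= c -> c <= 1 -> sub_observable ip (fun D x => c *: M D x).
Proof.
move=> [eM cM] c0 c1; have [r [cr r0 r1]] := realC01 c0 c1.
split; first by move=> D mD; exact: effect_scale (eM D mD) c0 c1.
move=> F mF tF x; have := cM F mF tF x; move/(hconvP hH) => h; apply/(hconvP hH) => e e0.
have [N hN] := h e e0; exists N => n /hN hn.
rewrite -scaler_sumr -scalerBr nrZ // cr conjc_real -rmorphM /=.
apply: le_lt_trans hn; rewrite -[X in _ <= X]mul1r; apply: ler_wpM2r; first exact: nr_ge0.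
nra.
Qed.

End Main.

Theorem theorem3p3 (R : realType) (H : lmodType R[i]) (ip : H -> H -> R[i])
  (hH : is_hilbert ip) (d : measure_display) (Omega : measurableType d)
  (alpha : H -> H) (A : set Omega -> H -> H) :
  state ip alpha -> observable ip A ->
  Sob_effect_algebra ip (holevo_dual_set ip alpha A).
Proof.
move=> hst [hA1 hA2].
have alin : linear_op alpha := hst.1.1.
have atr : trace_is ip alpha 1 := hst.2.2.
split.
  move=> M [a [ea [t [ht ->]]]]; have [t0 t1] := trace_bound hH hst ea ht.
  exact: sub_obs_scale hA1 t0 t1.
exists (fun D x => 1 *: A D x); split.
- exists id; split; first exact: effect_id.
  by exists 1; split.
- split; first exact: sub_obs_scale hA1 ler01 (lexx _).
  by apply: funext => x; rewrite hA2 scale1r.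
- move=> M [a [ea [t [ht ->]]]].
  exists (fun x => x - a x); split; first exact: effect_compl.
  exists (1 - t); split.
    move=> B oB; have := has_sum_sub (atr B oB) (ht B oB).
    have -> : (fun e => ip e ((alpha \o (fun x => x - a x)) e)) =
              (fun e => ip e (alpha e) - ip e ((alpha \o a) e)).
      by apply: funext => e /=; rewrite (TB alin) (qBr (ip_sesq hH)).
    done.
  by apply: funext => D; apply: funext => x; rewrite /opmap_sub scalerBl.
- move=> M N [a [ea [t [ht ->]]]] [b [eb [s [hs' ->]]]] hsub.
  have [e ee] : exists e, ip e e = 1.
    have [E [oE _]] := eig_onb hH hst.
    have h2 : 0 < 1 / 2 :> R[i] by rewrite divr_gt0.
    have [s0 [u0 [B0 h]]] := atr E oE _ h2.
    case: s0 u0 B0 h => [|e s0] u0 B0 h.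
      have := h [::] isT (fun _ x => x) B0; rewrite big_nil sub0r normrN normr1 => h3.
      have h4 : 1 / 2 < (1 : R[i]) by rewrite ltr_pdivrMr // mul1r ltr1n.
      by have := lt_trans h3 h4; rewrite ltxx.
    by exists e; apply: oE.1; apply: B0; rewrite mem_head.
  have [_ ea2] := (hsub.1 setT measurableT).
  have := ea2 e; rewrite /opmap_add hA2 (qDr (ip_sesq hH)) !(qZr (ip_sesq hH)) ee !mulr1.
  move=> [c0 c1].
  exists (fun x => (t + s) *: x); split; first exact: effect_scale (effect_id hH) c0 c1.
  exists (t + s); split.
    move=> B oB; have := has_sum_scale (t + s) (atr B oB); rewrite mulr1.
    have -> : (fun e => ip e ((alpha \o (fun x => (t + s) *: x)) e)) =
              (fun e => (t + s) * ip e (alpha e)).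
      by apply: funext => e' /=; rewrite (TZ alin) (qZr (ip_sesq hH)).
    done.
  by apply: funext => D; apply: funext => x; rewrite /opmap_add scalerDl.
Qed.
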